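(* Let $\mathbf S$ and $\mathbf T$ be label cover instances such that $\mathbf S\to\pi_{\mathbf P}(\mathbf T)$. Then $\pi_{\mathbf B}(\mathbf S)\to\pi_{\mathbf B}(\mathbf T)$ for every structure $\mathbf B$.
   Context: Structures. A (multisorted relational) signature consists of types and relation symbols, each symbol $R$ having an arity $\mathrm{ar}_R$, a tuple of types. A structure $\mathbf A$ consists of a set $A_t$ per type and relations $R^{\mathbf A}\subseteq A_{\mathrm{ar}_R(1)}\times\dots\times A_{\mathrm{ar}_R(k)}$. A homomorphism is a type-preserving family of maps preserving all relations; write $\mathbf A\to\mathbf B$. For a finite set $X$, $\mathbf B^X$ has domains $B_t^X$ (maps $X\to B_t$) and $(b_1,\dots,b_m)\in R^{\mathbf B^X}$ iff $(b_1(i),\dots,b_m(i))\in R^{\mathbf B}$ for all $i\in X$. Label cover. The label cover signature has a type $X$ for each finite set $X$ and a binary symbol $E_\pi$ of arity $(X,Y)$ for each map $\pi\colon X\to Y$. The label cover template $\mathbf P$ has domain $P_X=X$ for each type $X$ and $E_\pi^{\mathbf P}=\{(x,\pi(x))\mid x\in X\}$. A label cover instance is a structure in this signature with finitely many nonempty domains, all finite. Universal gadget. For a structure $\mathbf B$ (in any signature, possibly the label cover signature itself) and a label cover instance $\mathbf S$, $\pi_{\mathbf B}(\mathbf S)$ is obtained by taking a copy of $\mathbf B^X$ for each element $s$ of type $X$ (elements $(s;b)$, $b\colon X\to B_t$), identifying $(s;b\circ\sigma)$ with $(t;b)$ for each $(s,t)\in E_\sigma^{\mathbf S}$ with $\sigma\colon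 X\to Y$ and each $b\colon Y\to B_u$, and taking the quotient by the generated equivalence relation, with relations the images of those of the copies. In particular $\pi_{\mathbf P}(\mathbf T)$ is a structure in the label cover signature. *)

(* Defs.v *)
From Stdlib Require Import Relations.
From Stdlib Require List.
From HB Require Import structures.
From mathcomp Require Import all_boot.

Record sig := Sig {
  ty : Type;
  sym : Type;
  arn : sym -> nat;
  art : forall R : sym, 'I_(arn R) -> ty }.

(* A structure: one domain per type, and for each symbol a relation on tuples
   (a tuple is a dependent function i |-> element of type ar_R(i)). *)
Record structure (S : sig) := Struct {
  dom : ty S -> Type;
  rel : forall R : sym S, (forall i : 'I_(arn S R), dom (art S R i)) -> Prop }.

Arguments dom {S} _ _.
Arguments rel {S} _ _ _.

Definition is_hom {S : sig} (A B : structure S)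
    (h : forall t : ty S, dom A t -> dom B t) : Prop :=
  forall (R : sym S) (tup : forall i, dom A (art S R i)),
    rel A R tup -> rel B R (fun i => h _ (tup i)).

Definition hom {S : sig} (A B : structure S) : Prop :=
  exists h : forall t : ty S, dom A t -> dom B t, is_hom A B h.

Definition pow {S : sig} (B : structure S) (X : finType) : structure S :=
  @Struct S (fun t => X -> dom B t)
    (fun R tup => forall x : X, rel B R (fun i => tup i x)).

(* types: finite sets X (finTypes); symbols: E_pi for each map pi : X -> Y *)
Definition LCsym : Type := {X : finType & {Y : finType & X -> Y}}.

Definition LCart (R : LCsym) (i : 'I_2) : finType :=
  match val i with 0 => projT1 R | _ => projT1 (projT2 R) end.

Definition LC : sig := @Sig finType LCsym (fun _ => 2) LCart.

Definition Esym {X Y : finType} (p : X -> Y) : LCsym :=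
  existT _ X (existT _ Y p).

(* The label cover template P: P_X = X, E_pi = graph of pi. *)
Definition P : structure LC :=
  @Struct LC (fun X : finType => (X : Type))
    (fun R tup => tup ord_max = projT2 (projT2 R) (tup ord0)).

(* A label cover instance: finitely many nonempty domains, all finite. *)
Definition finite_type (A : Type) : Prop :=
  exists l : list A, forall a : A, List.In a l.

Definition LCinstance (S : structure LC) : Prop :=
  (exists l : list finType, forall X : finType,
      inhabited (dom S X) -> List.In X l) /\
  (forall X : finType, finite_type (dom S X)).

Definition LCedge (S : structure LC) {X Y : finType} (p : X -> Y)
    (s : dom S X) (t : dom S Y) : Prop :=
  exists tup : (forall i : 'I_2, dom S (LCart (Esym p) i)),
    rel S (Esym p) tup /\ tup ord0 = s /\ tup ord_max = t.

Definition quot {A : Type} (R : A -> A -> Prop) : Type :=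
  {C : A -> Prop | exists a : A, C = clos_refl_sym_trans A R a}.

Definition cls {A : Type} (R : A -> A -> Prop) (a : A) : quot R :=
  exist _ (clos_refl_sym_trans A R a) (ex_intro _ a erefl).

(* raw elements of type u: (s; b) with s of type X in S and b : X -> B_u *)
Definition graw {Sg : sig} (B : structure Sg) (S : structure LC) (u : ty Sg)
  : Type := {X : finType & (dom S X * (X -> dom B u))%type}.

Definition gR (Sg : sig) (B : structure Sg) (S : structure LC) (u : ty Sg)
    (a a' : @graw Sg B S u) : Prop :=
  exists (X Y : finType) (sigma : X -> Y) (s : dom S X) (t : dom S Y)
         (b : Y -> dom B u),
    LCedge S sigma s t /\
    a = existT _ X (s, b \o sigma) /\ a' = existT _ Y (t, b).

Definition gadget {Sg : sig} (B : structure Sg) (S : structure LC)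
  : structure Sg :=
  @Struct Sg (fun u => quot (@gR Sg B S u))
    (fun R c => exists (X : finType) (s : dom S X)
                       (b : forall i, X -> dom B (art Sg R i)),
        rel (pow B X) R b /\
        forall i, c i = cls (@gR Sg B S _) (existT _ X (s, b i))).

(* Main.v *)
Require Import Defs.
From HB Require Import structures.
From mathcomp Require Import all_boot.
From Stdlib Require Import Relations ClassicalEpsilon FunctionalExtensionality
  PropExtensionality ProofIrrelevance.

Set Implicit Arguments.
Definition rep {A : Type} {R : A -> A -> Prop} (C : quot R) : A :=
  proj1_sig (constructive_indefinite_description _ (proj2_sig C)).

Lemma rep_spec {A : Type} {R : A -> A -> Prop} (C : quot R) :
  proj1_sig C = clos_refl_sym_trans A R (rep C).
Proof. exact (proj2_sig (constructive_indefinite_description _ (proj2_sig C))). Qed.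

Lemma cls_eq {A : Type} (R : A -> A -> Prop) (a a' : A) :
  clos_refl_sym_trans A R a a' -> cls R a = cls R a'.
Proof.
  move=> H.
  have Hc : clos_refl_sym_trans A R a = clos_refl_sym_trans A R a'.
    apply: functional_extensionality => x; apply: propositional_extensionality.
    split=> Hx.
    - apply: rst_trans; [apply: rst_sym; exact H| exact Hx].
    - apply: rst_trans; [exact H| exact Hx].
  apply (eq_sig (cls R a) (cls R a') Hc); apply: proof_irrelevance.
Qed.

Lemma rep_cls {A : Type} (R : A -> A -> Prop) (C : quot R) (a : A) :
  C = cls R a -> clos_refl_sym_trans A R (rep C) a.
Proof.
  move=> HC.
  have H1 := rep_spec C.
  have H2 : proj1_sig C = clos_refl_sym_trans A R a by rewrite HC.
  rewrite H1 in H2. rewrite H2. apply: rst_refl.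
Qed.

Lemma map_clos {A B : Type} (R : A -> A -> Prop) (R' : B -> B -> Prop)
  (f : A -> B) : (forall a a', R a a' -> clos_refl_sym_trans B R' (f a) (f a')) ->
  forall a a', clos_refl_sym_trans A R a a' -> clos_refl_sym_trans B R' (f a) (f a').
Proof.
  move=> Hf a a'; elim=> {a a'}.
  - move=> x y /Hf //.
  - move=> x; apply: rst_refl.
  - move=> x y _ H; apply: rst_sym; exact H.
  - move=> x y z _ H1 _ H2; apply: rst_trans; [exact H1| exact H2].
Qed.

Section Main.
Variables (S T : structure LC) (Sg : sig) (B : structure Sg).
Variable hS : forall X : finType, dom S X -> quot (@gR LC P T X).
Hypothesis Hh : is_hom S (gadget P T) hS.

Definition gl (X : finType) (u : ty Sg) (phi : X -> dom B u)
  (r : graw P T X) : graw B T u :=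
  existT _ (projT1 r) (fst (projT2 r), fun z => phi (snd (projT2 r) z)).
Arguments gl {X u} phi r.

Lemma gl_clos (X : finType) (u : ty Sg) (phi : X -> dom B u) r r' :
  clos_refl_sym_trans _ (@gR LC P T X) r r' ->
  clos_refl_sym_trans _ (@gR Sg B T u) (gl phi r) (gl phi r').
Proof.
  apply: map_clos => a a' [X0 [Y [sg [s [t [b [E [-> ->]]]]]]]].
  apply: rst_step. exists X0, Y, sg, s, t, (fun y => phi (b y)).
  split; [exact E| split; reflexivity].
Qed.

Definition fraw (u : ty Sg) (a : graw B S u) : graw B T u :=
  gl (snd (projT2 a)) (rep (@hS (projT1 a) (fst (projT2 a)))).
Arguments fraw {u} a.

Lemma fraw_resp (u : ty Sg) a a' : @gR Sg B S u a a' ->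
  clos_refl_sym_trans _ (@gR Sg B T u) (fraw a) (fraw a').
Proof.
  move=> [X [Y [sg [s [s' [b [[tup [Hr [H0 H1]]] [-> ->]]]]]]]].
  have [W [w [c [Hc Hci]]]] := @Hh (Esym sg) tup Hr.
  have E0 : hS _ (tup ord0) = cls _ (existT _ W (w, c ord0)) := Hci ord0.
  have E1 : hS _ (tup ord_max) = cls _ (existT _ W (w, c ord_max)) := Hci ord_max.
  change (hS X (tup ord0) = cls (@gR LC P T X) (existT _ W (w, c ord0))) in E0.
  change (hS Y (tup ord_max) = cls (@gR LC P T Y) (existT _ W (w, c ord_max))) in E1.
  rewrite H0 in E0. rewrite H1 in E1.
  have K0 := @gl_clos X u (fun x => b (sg x)) _ _ (rep_cls E0).
  have K1 := @gl_clos Y u b _ _ (rep_cls E1).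
  change (clos_refl_sym_trans _ (@gR Sg B T u)
    (gl (fun x => b (sg x)) (rep (hS _ s))) (gl b (rep (hS _ s')))).
  apply: rst_trans; first exact K0.
  apply: rst_trans; last (apply: rst_sym; exact K1).
  have -> : gl (fun x => b (sg x)) (existT _ W (w, c ord0)) =
            gl b (existT _ W (w, c ord_max)).
    rewrite /gl /=. f_equal. f_equal.
    apply: functional_extensionality => z. rewrite (Hc z). reflexivity.
  apply: rst_refl.
Qed.

Definition F (u : ty Sg) (C : quot (@gR Sg B S u)) : quot (@gR Sg B T u) :=
  cls _ (fraw (rep C)).

Lemma F_cls u a : F (cls (@gR Sg B S u) a) = cls _ (fraw a).
Proof.
  apply: cls_eq. apply: (@map_clos _ _ _ _ (@fraw u) (@fraw_resp u)). apply: rep_cls. reflexivity.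
Qed.

Lemma F_hom : is_hom (gadget B S) (gadget B T) F.
Proof.
  move=> R c [X [s [b [Hb Hc]]]].
  set r := rep (hS _ s).
  exists (projT1 r), (fst (projT2 r)),
    (fun i z => b i (snd (projT2 r) z)).
  split.
  - move=> z. exact (Hb (snd (projT2 r) z)).
  - move=> i. rewrite Hc F_cls. reflexivity.
Qed.

End Main.

Theorem mainTheorem17 (S T : structure LC) :
  LCinstance S -> LCinstance T ->
  hom S (gadget P T) ->
  forall (Sg : sig) (B : structure Sg), hom (gadget B S) (gadget B T).
Proof.
  move=> _ _ [h Hh] Sg B.
  exists (@F S T Sg B h). exact: F_hom.
Qed.
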